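(* Let $A$ be a local ring with maximal ideal $\mathfrak m$ and residue field $k$, and assume $2\in A^\times$. Then $u(A)$ equals the smallest $u\in\mathbb Z_{\geq1}\cup\{\infty\}$ such that every non-singular quadratic module $(V,q)$ over $A$ with $\dim_k V/\mathfrak mV\geq u$ is universal.
   Context: A quadratic module over $A$ is $(V,q)$ with $V$ finitely generated projective, $q(ax)=a^2q(x)$ and $B_q(x,y)=q(x+y)-q(x)-q(y)$ bilinear; non-singular if $x\mapsto B_q(x,-)$ is an isomorphism $V\to\mathrm{Hom}_A(V,A)$. $(V,q)$ is isotropic if there is $x\in V\setminus\mathfrak mV$ with $q(x)=0$, anisotropic otherwise, and universal if it represents every unit, i.e. for each $a\in A^\times$ there is $x$ with $q(x)=a$. $u(A)=\sup\{\dim_k V/\mathfrak mV : (V,q)\text{ non-singular and anisotropic}\}$. *)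

(* Defs.v *)
From HB Require Import structures.
From mathcomp Require Import all_boot all_order all_algebra.
Set Implicit Arguments. Unset Strict Implicit. Unset Printing Implicit Defensive.
Import Order.TTheory GRing.Theory.
Local Open Scope ring_scope.

(* A commutative ring A (with 1 <> 0) is local iff its non-units form an
   ideal; it is enough that they are closed under addition. The maximal
   ideal m is then the set of non-units. *)
Definition is_local (A : comUnitRingType) : Prop :=
  forall x y : A, x \isn't a GRing.unit -> y \isn't a GRing.unit ->
    (x + y) \isn't a GRing.unit.

Section QF.
Variables (A : comUnitRingType) (n : nat).

(* V = A^n (free of rank n, so dim_k V/mV = n). *)
Definition Bq (q : 'rV[A]_n -> A) (x y : 'rV[A]_n) : A := q (x + y) - q x - q y.

Definition is_quadratic (q : 'rV[A]_n -> A) : Prop :=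
  (forall (a : A) x, q (a *: x) = a ^+ 2 * q x) /\
  (forall (a : A) x y z, Bq q (a *: x + y) z = a * Bq q x z + Bq q y z) /\
  (forall (a : A) x y z, Bq q x (a *: y + z) = a * Bq q x y + Bq q x z).

Definition is_linear_form (f : 'rV[A]_n -> A) : Prop :=
  forall (a : A) x y, f (a *: x + y) = a * f x + f y.

(* x |-> B_q(x,-) is an isomorphism V -> Hom_A(V,A) (it is A-linear by
   bilinearity of B_q, so bijectivity is what is required). *)
Definition nonsingular (q : 'rV[A]_n -> A) : Prop :=
  (forall x y, (forall z, Bq q x z = Bq q y z) -> x = y) /\
  (forall f, is_linear_form f -> exists x, forall z, Bq q x z = f z).

(* x \in mV, with m the maximal ideal (= non-units) of the local ring A *)
Definition in_mV (x : 'rV[A]_n) : Prop :=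
  forall i, x 0 i \isn't a GRing.unit.

Definition isotropic (q : 'rV[A]_n -> A) : Prop :=
  exists x, ~ in_mV x /\ q x = 0.

Definition anisotropic (q : 'rV[A]_n -> A) : Prop := ~ isotropic q.

Definition universal (q : 'rV[A]_n -> A) : Prop :=
  forall a : A, a \is a GRing.unit -> exists x, q x = a.

End QF.

(* Values in Z_{>=0} u {oo}: [Some N] is N, [None] is oo. *)

(* [is_u_invariant A e] : u(A) = e, where
   u(A) = sup { n | some non-singular anisotropic quadratic module of
                    rank n over A exists }. *)
Definition is_u_invariant (A : comUnitRingType) (e : option nat) : Prop :=
  match e with
  | Some N =>
      (exists q : 'rV[A]_N -> A, is_quadratic q /\ nonsingular q /\ anisotropic q)
      /\ (forall n (q : 'rV[A]_n -> A),
            is_quadratic q -> nonsingular q -> anisotropic q -> (n <= N)%N)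
  | None =>
      forall N, exists n (q : 'rV[A]_n -> A),
        (N < n)%N /\ is_quadratic q /\ nonsingular q /\ anisotropic q
  end.

Definition universal_from (A : comUnitRingType) (u : nat) : Prop :=
  forall n (q : 'rV[A]_n -> A),
    (u <= n)%N -> is_quadratic q -> nonsingular q -> universal q.

(* [is_universality_threshold A e] : e is the smallest u in Z_{>=1} u {oo}
   with [universal_from A u] (for u = oo the condition is vacuous). *)
Definition is_universality_threshold (A : comUnitRingType) (e : option nat) : Prop :=
  match e with
  | Some u => (1 <= u)%N /\ universal_from A u /\
              (forall v, (1 <= v)%N -> universal_from A v -> (u <= v)%N)
  | None => forall u, (1 <= u)%N -> ~ universal_from A u
  end.

(* Main.v *)
Require Import Defs.
From mathcomp Require Import all_boot all_order all_algebra.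
From mathcomp Require Import ring zify.
From Stdlib Require Import Classical.
Set Implicit Arguments. Unset Strict Implicit. Unset Printing Implicit Defensive.
Import GRing.Theory.
Local Open Scope ring_scope.

Section Basic.
Variable A : comUnitRingType.

Lemma lsubD n1 n2 (x y : 'rV[A]_(n1 + n2)) : lsubmx (x + y) = lsubmx x + lsubmx y.
Proof. by apply/matrixP=> i j; rewrite !mxE. Qed.
Lemma lsubZ n1 n2 a (x : 'rV[A]_(n1 + n2)) : lsubmx (a *: x) = a *: lsubmx x.
Proof. by apply/matrixP=> i j; rewrite !mxE. Qed.
Lemma rsubD n1 n2 (x y : 'rV[A]_(n1 + n2)) : rsubmx (x + y) = rsubmx x + rsubmx y.
Proof. by apply/matrixP=> i j; rewrite !mxE. Qed.
Lemma rsubZ n1 n2 a (x : 'rV[A]_(n1 + n2)) : rsubmx (a *: x) = a *: rsubmx x.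
Proof. by apply/matrixP=> i j; rewrite !mxE. Qed.

Lemma r00D n1 (x y : 'rV[A]_(n1 + 1)) : rsubmx (x + y) 0 0 = rsubmx x 0 0 + rsubmx y 0 0.
Proof. by rewrite !mxE. Qed.
Lemma r00Z n1 a (x : 'rV[A]_(n1 + 1)) : rsubmx (a *: x) 0 0 = a * rsubmx x 0 0.
Proof. by rewrite !mxE. Qed.

Lemma r00B n1 (x y : 'rV[A]_(n1 + 1)) : rsubmx (x - y) 0 0 = rsubmx x 0 0 - rsubmx y 0 0.
Proof. by rewrite !mxE. Qed.

Variable n : nat.
Variable q : 'rV[A]_n -> A.
Hypothesis hq : is_quadratic q.

Lemma q0 : q 0 = 0.
Proof. by case: hq => hs _; rewrite -(scale0r 0) hs expr2 !mul0r. Qed.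
Lemma Bq0l z : Bq q 0 z = 0.
Proof. by rewrite /Bq add0r q0 subr0 subrr. Qed.
Lemma BqC x y : Bq q x y = Bq q y x.
Proof. rewrite /Bq (addrC x y); ring. Qed.
Lemma Bq0r z : Bq q z 0 = 0.
Proof. by rewrite BqC Bq0l. Qed.
Lemma BqZl a x z : Bq q (a *: x) z = a * Bq q x z.
Proof. case: hq => _ [hl _]. by have := hl a x 0 z; rewrite addr0 Bq0l addr0. Qed.
Lemma BqDl x y z : Bq q (x + y) z = Bq q x z + Bq q y z.
Proof. case: hq => _ [hl _]. by have := hl 1 x y z; rewrite scale1r mul1r. Qed.
Lemma BqZr a x z : Bq q z (a *: x) = a * Bq q z x.
Proof. by rewrite BqC BqZl BqC. Qed.
Lemma BqDr x y z : Bq q z (x + y) = Bq q z x + Bq q z y.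
Proof. by rewrite BqC BqDl !(BqC z). Qed.
Lemma qD x y : q (x + y) = q x + q y + Bq q x y.
Proof. rewrite /Bq; ring. Qed.
Lemma qZ a x : q (a *: x) = a ^+ 2 * q x.
Proof. by case: hq. Qed.
Lemma Bqxx x : Bq q x x = 2 * q x.
Proof.
have -> : Bq q x x = q (2%:R *: x) - q x - q x by rewrite scaler_nat mulr2n.
rewrite qZ; ring.
Qed.
Lemma q_lin a b x y : q (a *: x + b *: y) = a ^+ 2 * q x + b ^+ 2 * q y + a * b * Bq q x y.
Proof. by rewrite qD !qZ BqZl BqZr mulrA. Qed.
Lemma Bq_sum m (F : 'I_m -> 'rV[A]_n) z :
  Bq q (\sum_(i < m) F i) z = \sum_(i < m) Bq q (F i) z.
Proof. by apply: (big_morph (fun x => Bq q x z)) => [x y|]; [apply: BqDl|apply: Bq0l]. Qed.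

Lemma BqNr x z : Bq q z (- x) = - Bq q z x.
Proof. by rewrite -scaleN1r BqZr mulN1r. Qed.
Lemma BqBr x y z : Bq q z (x - y) = Bq q z x - Bq q z y.
Proof. by rewrite BqDr BqNr. Qed.

End Basic.
Section Local.
Variable A : comUnitRingType.
Hypothesis hloc : is_local A.
Hypothesis h2 : (2%:R : A) \is a GRing.unit.

Lemma unit_addn (u m : A) : u \is a GRing.unit -> m \isn't a GRing.unit -> (u + m) \is a GRing.unit.
Proof.
move=> hu hm; case: (boolP ((u + m) \is a GRing.unit)) => // H.
have := hloc H (_ : - m \isn't a GRing.unit); rewrite unitrN addrK hu => /(_ hm) //.
Qed.

Lemma nonunit_mull (c m : A) : m \isn't a GRing.unit -> (c * m) \isn't a GRing.unit.
Proof. by move=> hm; rewrite unitrM negb_and hm orbT. Qed.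

Lemma mV_Bq n (q : 'rV[A]_n -> A) (hq : is_quadratic q) x w :
  in_mV x -> Bq q x w \isn't a GRing.unit.
Proof.
move=> hx; rewrite (row_sum_delta x) Bq_sum //.
apply: (big_ind (fun y : A => y \isn't a GRing.unit)).
- by rewrite unitr0.
- by move=> y1 y2; apply: hloc.
- by move=> i _; rewrite BqZl // mulrC nonunit_mull.
Qed.

Definition osum n (q : 'rV[A]_n -> A) (a : A) : 'rV[A]_(n + 1) -> A :=
  fun v => q (lsubmx v) - a * (rsubmx v 0 0) ^+ 2.

Lemma Bq_osum n (q : 'rV[A]_n -> A) a v w :
  Bq (osum q a) v w = Bq q (lsubmx v) (lsubmx w) - 2 * a * (rsubmx v 0 0 * rsubmx w 0 0).
Proof. rewrite /Bq /osum lsubD r00D; ring. Qed.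

Lemma osum_quad n (q : 'rV[A]_n -> A) a : is_quadratic q -> is_quadratic (osum q a).
Proof.
move=> hq; split; [|split].
- move=> c v; rewrite /osum lsubZ r00Z qZ //; ring.
- move=> c x y z; rewrite !Bq_osum lsubD lsubZ r00D r00Z BqDl // BqZl //; ring.
- move=> c x y z; rewrite !Bq_osum lsubD lsubZ r00D r00Z BqDr // BqZr //; ring.
Qed.

Lemma osum_nonsing n (q : 'rV[A]_n -> A) a : is_quadratic q -> nonsingular q ->
  a \is a GRing.unit -> nonsingular (osum q a).
Proof.
move=> hq [hinj hsur] ha; have hu : (2 * a) \is a GRing.unit by rewrite unitrM h2 ha.
split.
- move=> v v' H.
  have HL : lsubmx v = lsubmx v'.
    apply: hinj => z; have := H (row_mx z 0).
    by rewrite !Bq_osum !row_mxKl !row_mxKr [(0 : 'rV_1) 0 0]mxE !mulr0 !subr0.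
  have HR : rsubmx v = rsubmx v'.
    have := H (row_mx 0 (const_mx 1)).
    rewrite !Bq_osum !row_mxKl !row_mxKr !Bq0r // [const_mx 1 0 0]mxE !mulr1 !sub0r.
    move=> /oppr_inj /(mulrI hu) E; apply/rowP => i; by rewrite (ord1 i).
  by rewrite -(hsubmxK v) -(hsubmxK v') HL HR.
- move=> f hf.
  have lin1 : is_linear_form (fun z : 'rV[A]_n => f (row_mx z 0)).
    by move=> c x y; rewrite -hf scale_row_mx add_row_mx scaler0 addr0.
  have [x0 Hx0] := hsur _ lin1.
  pose F := f (row_mx 0 (const_mx 1)).
  exists (row_mx x0 (const_mx (- (2 * a)^-1 * F))) => z.
  rewrite Bq_osum row_mxKl row_mxKr Hx0 [const_mx _ 0 0]mxE.
  have Ez : rsubmx z 0 0 *: row_mx 0 (const_mx 1) + row_mx (lsubmx z) 0 = z.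
    rewrite scale_row_mx add_row_mx scaler0 add0r addr0 -[RHS]hsubmxK; congr row_mx.
    by apply/rowP => i; rewrite (ord1 i) !mxE mulr1.
  rewrite -[in RHS]Ez hf -/F.
  have -> : 2 * a * (- (2 * a)^-1 * F * rsubmx z 0 0) = - ((2 * a) * (2 * a)^-1) * F * rsubmx z 0 0 by ring.
  rewrite divrr //; ring.
Qed.

Lemma exists_unit_coord m (v : 'rV[A]_m) : ~ in_mV v -> exists j, v 0 j \is a GRing.unit.
Proof.
move=> Hv; apply: NNPP => H; apply: Hv => j; apply/negP => Hj; apply: H; by exists j.
Qed.

Lemma inv_rep n (q : 'rV[A]_n -> A) (hq : is_quadratic q) x a t :
  t \is a GRing.unit -> q x = a * t ^+ 2 -> q (t^-1 *: x) = a.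
Proof. by move=> tu qx; rewrite qZ // qx mulrCA -exprMn mulVr // expr1n mulr1. Qed.

Lemma osum_iso_rep n (q : 'rV[A]_n -> A) a : is_quadratic q -> nonsingular q ->
  a \is a GRing.unit -> isotropic (osum q a) -> exists x, q x = a.
Proof.
move=> hq [hinj hsur] ha [v [Hv Hq0]].
set x := lsubmx v; set t := rsubmx v 0 0.
have qx : q x = a * t ^+ 2 by move/eqP: Hq0; rewrite /osum subr_eq0 => /eqP.
case tu: (t \is a GRing.unit).
  by exists (t^-1 *: x); apply: inv_rep.
have [i xi] : exists i, x 0 i \is a GRing.unit.
  have [j Hj] := exists_unit_coord Hv.
  case: (split_ordP j) => k Ek; rewrite Ek in Hj.
    by exists k; rewrite /x mxE.
  by move: tu Hj; rewrite /t mxE (ord1 k) => ->.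
have linf : is_linear_form (fun z : 'rV[A]_n => z 0 i) by move=> c y1 y2 /=; rewrite !mxE.
have [y Hy] := hsur _ linf.
set b := Bq q x y.
have bu : b \is a GRing.unit by rewrite /b BqC // Hy.
set al := q y - a; set be := - (b - 2 * a * t).
have qx' : q (al *: x + be *: y) = a * (al * t + be) ^+ 2.
  rewrite q_lin // qx -/b /be /al; ring.
have tu' : (al * t + be) \is a GRing.unit.
  have -> : al * t + be = - b + (al + 2 * a) * t by rewrite /be; ring.
  by apply: unit_addn; rewrite ?unitrN // nonunit_mull // tu.
by exists ((al * t + be)^-1 *: (al *: x + be *: y)); apply: inv_rep.
Qed.

End Local.
Section Comp.
Variable A : comUnitRingType.
Hypothesis hloc : is_local A.
Hypothesis h2 : (2%:R : A) \is a GRing.unit.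

Lemma comp_nonsing m k (q : 'rV[A]_m -> A) (phi : 'rV[A]_k -> 'rV[A]_m)
  (pi : 'rV[A]_m -> 'rV[A]_k) (w : 'rV[A]_m) :
  is_quadratic q -> nonsingular q ->
  (forall a x y, phi (a *: x + y) = a *: phi x + phi y) ->
  (forall a x y, pi (a *: x + y) = a *: pi x + pi y) ->
  (forall z, pi (phi z) = z) ->
  (forall x, exists l, x = phi (pi x) + l *: w) ->
  (forall z, Bq q w (phi z) = 0) ->
  is_quadratic (fun z => q (phi z)) /\ nonsingular (fun z => q (phi z)).
Proof.
move=> hq [hinj hsur] lphi lpi hpp hdec horth.
have phi0 : phi 0 = 0.
  have := lphi 1 0 0; rewrite !scale1r addr0.
  by move=> H; apply: (@addrI _ (phi 0)); rewrite addr0 -H.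
have phiD x y : phi (x + y) = phi x + phi y.
  have := lphi 1 x y; by rewrite !scale1r.
have phiZ a x : phi (a *: x) = a *: phi x by rewrite -[a *: x]addr0 lphi phi0 addr0.
have BqP x y : Bq (fun z => q (phi z)) x y = Bq q (phi x) (phi y) by rewrite /Bq phiD.
split; [split; [|split]|split].
- by move=> a x /=; rewrite phiZ qZ.
- by move=> a x y z; rewrite !BqP lphi BqDl // BqZl.
- by move=> a x y z; rewrite !BqP lphi BqDr // BqZr.
- move=> z1 z2 H; rewrite -(hpp z1) -(hpp z2); congr pi; apply: hinj => x.
  have [l El] := hdec x.
  have := H (pi x); rewrite !BqP => H'.
  rewrite El !BqDr // !BqZr // ![Bq q (phi _) w]BqC // !horth !mulr0 !addr0 //.
- move=> f hf.
  have lg : is_linear_form (fun x => f (pi x)) by move=> a x y /=; rewrite lpi hf.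
  have [y Hy] := hsur _ lg; exists (pi y) => z; rewrite BqP.
  have [l El] := hdec y.
  have : Bq q y (phi z) = f z by rewrite Hy hpp.
  by rewrite {1}El BqDl // BqZl // horth mulr0 addr0.
Qed.

Lemma complement k (q : 'rV[A]_(k + 1) -> A) : is_quadratic q -> nonsingular q ->
  anisotropic q ->
  exists q' : 'rV[A]_k -> A, is_quadratic q' /\ nonsingular q' /\ ~ universal q'.
Proof.
move=> hq hns han; have [hinj hsur] := hns.
have llast : is_linear_form (fun x : 'rV[A]_(k + 1) => rsubmx x 0 0).
  by move=> a x y /=; rewrite r00D r00Z.
have [y Hy] := hsur _ llast.
pose e : 'rV[A]_(k + 1) := row_mx 0 (const_mx 1).
have le : rsubmx e 0 0 = 1 by rewrite /e row_mxKr mxE.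
have qy2 : 2 * q y = rsubmx y 0 0 by rewrite -Bqxx // Hy.
have [w [wu lw]] : exists w, q w \is a GRing.unit /\ rsubmx w 0 0 \is a GRing.unit.
  case qe: (q e \is a GRing.unit); first by exists e; rewrite le unitr1.
  case ly: (rsubmx y 0 0 \is a GRing.unit).
    by exists y; split => //; move: ly; rewrite -qy2 unitrM => /andP[].
  exists (e + y); split.
  - rewrite qD // BqC // Hy le addrC; apply: unit_addn => //; first exact: unitr1.
    apply: hloc; first by rewrite qe.
    by apply/negP => H; move: ly; rewrite -qy2 unitrM h2 H.
  - by rewrite r00D le; apply: unit_addn => //; rewrite ?unitr1 ?ly.
pose c := q w; pose d := Bq q w w; pose l := rsubmx w 0 0.
have du : d \is a GRing.unit by rewrite /d Bqxx // unitrM h2 wu.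
pose iota (z : 'rV[A]_k) : 'rV[A]_(k + 1) := row_mx z 0.
pose phi z := iota z - (Bq q w (iota z) / d) *: w.
pose pi (x : 'rV[A]_(k + 1)) := lsubmx (x - (rsubmx x 0 0 / l) *: w).
have liota a x1 x2 : iota (a *: x1 + x2) = a *: iota x1 + iota x2.
  by rewrite /iota scale_row_mx add_row_mx scaler0 addr0.
have riota z : rsubmx (iota z) 0 0 = 0 by rewrite /iota row_mxKr mxE.
have horth z : Bq q w (phi z) = 0.
  by rewrite /phi BqBr // BqZr // -/d divrK // subrr.
have lphi a x1 x2 : phi (a *: x1 + x2) = a *: phi x1 + phi x2.
  rewrite /phi liota BqDr // BqZr //.
  apply/matrixP => i j; rewrite !mxE; ring.
have lpi a x1 x2 : pi (a *: x1 + x2) = a *: pi x1 + pi x2.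
  rewrite /pi r00D r00Z -lsubZ -lsubD; congr lsubmx.
  apply/matrixP => i j; rewrite !mxE; ring.
have hpp z : pi (phi z) = z.
  have E : rsubmx (phi z) 0 0 / l = - (Bq q w (iota z) / d).
    by rewrite /phi /=; rewrite (r00B (iota z)) riota r00Z sub0r -/l mulNr (mulrK lw) //.
  by rewrite /pi E scaleNr opprK subrK /iota row_mxKl.
have hdec x : exists lam, x = phi (pi x) + lam *: w.
  have Hu : iota (pi x) = x - (rsubmx x 0 0 / l) *: w.
    rewrite /iota /pi -[RHS]hsubmxK; congr row_mx.
    apply/rowP => i; rewrite (ord1 i) [LHS]mxE (r00B x) r00Z -/l divrK // subrr //.
  exists (Bq q w (iota (pi x)) / d + rsubmx x 0 0 / l).
  rewrite /phi Hu; apply/matrixP => i j; rewrite !mxE; ring.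
have [hq' hns'] := comp_nonsing hq hns lphi lpi hpp hdec horth.
exists (fun z => q (phi z)); split => //; split => // Huniv.
have cu : (- c) \is a GRing.unit by rewrite unitrN.
have [z /= Hz] := Huniv _ cu.
have q0' : q (phi z + w) = 0 by rewrite qD // Hz -/c BqC // horth addr0 addNr.
have : in_mV (phi z + w) by apply: NNPP => H; apply: han; exists (phi z + w).
move=> /(fun H => mV_Bq hloc hq w H); rewrite BqDl // BqC // horth add0r -/d du //.
Qed.

End Comp.
Section Main.
Variable A : comUnitRingType.
Hypothesis hloc : is_local A.
Hypothesis h2 : (2%:R : A) \is a GRing.unit.

Lemma rank1 : exists q : 'rV[A]_1 -> A, is_quadratic q /\ nonsingular q /\ anisotropic q.
Proof.
pose q0 := fun _ : 'rV[A]_0 => (0 : A).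
have hq0 : is_quadratic q0.
  by split; [move=> a x; rewrite /q0 mulr0|split=> *; rewrite /Bq /q0 !subr0 mulr0 addr0].
have hns0 : nonsingular q0.
  split; first by move=> x y _; rewrite [x]thinmx0 [y]thinmx0.
  move=> f hf; exists 0 => z; rewrite [z]thinmx0 /Bq /q0 !subr0.
  have := hf 1 0 0; rewrite scale1r addr0 mul1r => H.
  by apply: (@addrI _ (f 0)); rewrite addr0 -H.
have hm1 : (-1 : A) \is a GRing.unit by rewrite unitrN unitr1.
exists (osum q0 (-1)); split; first exact (osum_quad (-1) hq0).
split; first exact (osum_nonsing h2 hq0 hns0 hm1).
move=> Hiso; have [x Hx] := osum_iso_rep hloc hq0 hns0 hm1 Hiso.
by move/eqP: Hx; rewrite /q0 eq_sym oppr_eq0 oner_eq0.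
Qed.

Definition bounded (N : nat) := forall n (q : 'rV[A]_n -> A),
  is_quadratic q -> nonsingular q -> anisotropic q -> (n <= N)%N.

Lemma U1 N : bounded N -> universal_from A N.
Proof.
move=> hb n q hn hq hns a ha; apply: NNPP => Hno.
have : (n + 1 <= N)%N.
  apply: (hb _ (osum q a)); [exact: osum_quad|exact: osum_nonsing|].
  by move=> Hiso; apply: Hno; apply: osum_iso_rep.
lia.
Qed.

Lemma U2 v : universal_from A v -> (1 <= v)%N -> bounded v.
Proof.
move=> hu hv n q hq hns han; case: (leqP n v) => // hlt; exfalso.
have [k Ek] : exists k, n = (k + 1)%N by exists n.-1; lia.
subst n.
have [q' [hq' [hns' hnu]]] := complement hloc h2 hq hns han.
by apply: hnu; apply: (hu k q') => //; lia.
Qed.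

Lemma nonuniv_extract u : ~ universal_from A u ->
  exists n (q : 'rV[A]_n -> A) a, (u <= n)%N /\ is_quadratic q /\ nonsingular q /\
    a \is a GRing.unit /\ ~ (exists x, q x = a).
Proof.
move=> Hnot; apply: NNPP => H; apply: Hnot => n q hn hq hns a ha.
apply: NNPP => hna; apply: H; exists n, q, a; split => //.
Qed.

End Main.

Theorem propositionA2 (A : comUnitRingType) (hloc : is_local A)
  (h2 : (2%:R : A) \is a GRing.unit) (e : option nat) :
  is_u_invariant A e <-> is_universality_threshold A e.
Proof.
case: e => [N|]; split.
- move=> [[q0 [hq0 [hns0 han0]]] hb]; split; [|split].
  + by have [q1 [h1 [h1' h1'']]] := rank1 hloc h2; exact: (hb _ q1).
  + exact: U1.
  + by move=> v hv hu; exact: (U2 hloc h2 hu hv hq0 hns0 han0).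
- move=> [hN [hu hmin]]; have hb := U2 hloc h2 hu hN; split => //.
  case: (leqP N 1) => hN1.
    have -> : N = 1%N by lia.
    exact: (rank1 hloc h2).
  have Hnot : ~ universal_from A N.-1.
    move=> H; have h1 : (1 <= N.-1)%N by lia.
    by have := hmin _ h1 H; lia.
  have [n [q [a [hn [hq [hns [ha hna]]]]]]] := nonuniv_extract Hnot.
  have han : anisotropic (osum q a) by move=> Hiso; apply: hna; apply: osum_iso_rep.
  have := hb _ _ (osum_quad a hq) (osum_nonsing h2 hq hns ha) han => hle.
  have E : N = (n + 1)%N by lia.
  subst N; exists (osum q a); split; [exact: osum_quad|split => //; exact: osum_nonsing].
- move=> hinf u hu huniv; have hb := U2 hloc h2 huniv hu.
  have [n [q [hlt [hq [hns han]]]]] := hinf u.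
  have := hb n q hq hns han; lia.
- move=> hnot N.
  have [n [q [a [hn [hq [hns [ha hna]]]]]]] := nonuniv_extract (hnot N.+1 erefl).
  have han : anisotropic (osum q a) by move=> Hiso; apply: hna; apply: osum_iso_rep.
  exists (n + 1)%N, (osum q a); split; first lia.
  split; [exact: osum_quad|split => //; exact: osum_nonsing].
Qed.
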